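(* Let $T\ge1$ and $0<\eta\le\frac{1}{5\sqrt T}$, and suppose $d:=\max\{25\eta^2T^2,1\}$ is a positive integer. Define $f:\mathbb R^d\to\mathbb R$ by $$f(w)=\max\Big\{0,\ \max_{i\in[d]}\Big(\frac{1}{\sqrt d}-w[i]-\frac{\eta i}{4d}\Big)\Big\},$$ where $w[i]$ is the $i$-th coordinate of $w$. Consider unprojected GD $w_1=0$, $w_{t+1}=w_t-\eta\nabla f(w_t)$, $1\le t<T$. Then for every $t\in[T]$: (i) $w_t[i]\le\frac{1}{2\sqrt d}$ for all $i\in[d]$; (ii) there is an index $j_t\in[d]$ such that for all $k\ne j_t$, $\frac{1}{\sqrt d}-w_t[j_t]-\frac{\eta j_t}{4d}>\frac{1}{\sqrt d}-w_t[k]-\frac{\eta k}{4d}+\frac{\eta}{8d}$; (iii) $\frac{1}{\sqrt d}-w_t[j_t]-\frac{\eta j_t}{4d}>\frac{\eta}{8d}$. In particular $f$ is differentiable at each $w_t$ with $\nabla f(w_t)=-e_{j_t}$, so the iterates are well defined.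
   Context: $e_j$ denotes the $j$-th standard basis vector of $\mathbb R^d$. *)

(* Defs.v *)
From HB Require Import structures.
From mathcomp Require Import all_boot all_order all_algebra.
From mathcomp Require Import all_classical all_reals all_analysis.
Set Implicit Arguments. Unset Strict Implicit. Unset Printing Implicit Defensive.
Import Order.TTheory GRing.Theory Num.Theory.
Import numFieldNormedType.Exports.
Local Open Scope ring_scope.

(* Vectors of R^d are row vectors 'rV[R]_d; coordinate w[i] (1-based i in [d])
   is w 0 i' with i' : 'I_d and i = i'+1. *)

Definition basis_vec (R : realType) (d : nat) (j : 'I_d) : 'rV[R]_d :=
  delta_mx 0 j.

(* gradient: the vector of partial derivatives, read off the differential 'd f x.
   When f is differentiable at x this is the gradient of f at x. *)
Definition gradient (R : realType) (d : nat) (f : 'rV[R]_d -> R) (x : 'rV[R]_d)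
  : 'rV[R]_d := \row_i ('d f x (basis_vec R i)).

(* the i-th linear piece (i : 'I_d stands for the 1-based index i+1) *)
Definition piece (R : realType) (d : nat) (eta : R) (w : 'rV[R]_d) (i : 'I_d) : R :=
  1 / Num.sqrt (d%:R) - w 0 i - eta * (i.+1)%:R / (4 * d%:R).

Definition hard_f (R : realType) (d : nat) (eta : R) (w : 'rV[R]_d) : R :=
  Num.max 0 (\big[Num.max/0]_(i < d) piece eta w i).

(* Main.v *)
Require Import Defs.
From HB Require Import structures.
From mathcomp Require Import all_boot all_order all_algebra.
From mathcomp Require Import all_classical all_reals all_analysis.
From mathcomp Require Import ring lra.
Import Order.TTheory GRing.Theory Num.Theory.
Import numFieldNormedType.Exports.
Local Open Scope ring_scope.
From mathcomp Require Import zify.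

Section Aux.
Variable R : realType.
Variable d : nat.

Lemma bigmax_ge_seq (I : eqType) (s : seq I) (F : I -> R) x0 j :
  j \in s -> F j <= \big[Num.max/x0]_(i <- s) F i.
Proof.
elim: s => // a s IH; rewrite in_cons big_cons => /orP [/eqP->|/IH H].
  by rewrite le_max lexx.
by rewrite le_max H orbT.
Qed.

Lemma bigmax_le_seq (I : eqType) (s : seq I) (F : I -> R) x0 M :
  x0 <= M -> (forall i, i \in s -> F i <= M) -> \big[Num.max/x0]_(i <- s) F i <= M.
Proof.
move=> h0; elim: s => [|a s IH] H; first by rewrite big_nil.
rewrite big_cons ge_max H ?mem_head //= IH // => i Hi.
by apply: H; rewrite in_cons Hi orbT.
Qed.

Lemma hard_f_eq eta (x : 'rV[R]_d) j : 0 < piece eta x j ->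
  (forall k, k != j -> piece eta x k < piece eta x j) ->
  hard_f eta x = piece eta x j.
Proof.
move=> H0 H; rewrite /hard_f.
have -> : \big[Num.max/0]_(i < d) piece eta x i = piece eta x j.
  apply/le_anti/andP; split.
    apply: bigmax_le_seq; first exact: ltW.
    move=> i _; case: (eqVneq i j) => [->//|/H/ltW//].
  by apply: bigmax_ge_seq; rewrite mem_index_enum.
by rewrite max_r // ltW.
Qed.

Definition ncoord (j : 'I_d) (v : 'rV[R]_d) : R := - v 0 j.

Lemma ncoord_lin j : linear (ncoord j).
Proof. move=> a u v; rewrite /ncoord !mxE. by rewrite scalerN opprD. Qed.

HB.instance Definition _ j := GRing.isLinear.Build R 'rV[R]_d R *:%R (ncoord j) (ncoord_lin j).

Lemma ncoord_cont j : continuous (ncoord j).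
Proof.
move=> x; rewrite /ncoord; exact: (cvgN (@coord_continuous R 1 d 0 j x)).
Qed.

Lemma local_affine_o (f : 'rV[R]_d -> R) x (L : {linear 'rV[R]_d -> R}) :
  (\forall y \near x, f y = f x + L (y - x)) ->
  f \o shift x = cst (f x) + L +o_ (0 : 'rV[R]_d) id.
Proof.
move=> Hn.
  apply/(@eqaddoP R 'rV[R]_d R^o 'rV[R]_d (nbhs (0 : 'rV[R]_d))) => eps eps0.
  rewrite (near_shift 0) in Hn; move: Hn; rewrite subr0 => Hn.
  near=> h; rewrite !fctE.
  have -> : f (h + x) = f x + L (h + x - x).
    by near: h; apply: filterS Hn => z /=.
  rewrite addrK subrr normr0 mulr_ge0 //; exact: ltW.
Unshelve. all: by end_near. Qed.

Lemma local_affine (f : 'rV[R]_d -> R) x (L : {linear 'rV[R]_d -> R}) :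
  continuous L ->
  (\forall y \near x, f y = f x + L (y - x)) ->
  differentiable f x /\ 'd f x = L :> (_ -> _).
Proof.
move=> Lc Hn.
have E := @local_affine_o f x L Hn.
have D := diff_unique Lc E.
split => //; apply/diff_locallyP; rewrite D; split => //.
Qed.

Lemma hard_f_near eta (x : 'rV[R]_d) j m : 0 < m -> m < piece eta x j ->
  (forall k, k != j -> piece eta x k + m < piece eta x j) ->
  \forall y \near x, hard_f eta y = hard_f eta x + ncoord j (y - x).
Proof.
move=> m0 mj mk.
have bd (y : 'rV[R]_d) i : ball x (m / 2) y -> - (m/2) < x 0 i - y 0 i < m/2.
  by case=> _ /(_ 0 i); rewrite /ball /= ltr_norml.
apply/nbhs_ballP; exists (m / 2); first by rewrite /= divr_gt0.
move=> y Hy.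
have Hj := bd y j Hy.
rewrite /= (@hard_f_eq eta y j); last first.
- move=> k kj; have := mk k kj; have Hk := bd y k Hy; move: Hj Hk.
  rewrite /piece /= => /andP[? ?] /andP[? ?] ?; lra.
- move: Hj; rewrite /piece /= => /andP[? ?]; move: mj; rewrite /piece; lra.
rewrite (@hard_f_eq eta x j); last first.
- by move=> k kj; have := mk k kj; lra.
- lra.
rewrite /piece /ncoord !mxE; lra.
Qed.

Lemma hard_f_grad eta (x : 'rV[R]_d) j m : 0 < m -> m < piece eta x j ->
  (forall k, k != j -> piece eta x k + m < piece eta x j) ->
  differentiable (hard_f eta) x /\ gradient (hard_f eta) x = - basis_vec R j.
Proof.
move=> m0 mj mk.
have [D1 D2] := @local_affine (hard_f eta) x (ncoord j) (@ncoord_cont j)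
  (@hard_f_near eta x j m m0 mj mk).
split => //; apply/rowP => i; rewrite /gradient /basis_vec. rewrite mxE D2 /ncoord. rewrite /= !mxE. 
by rewrite /ncoord mxE eq_sym.
Qed.
End Aux.
Lemma step_nat d n i : (0 < d)%N -> (i < d)%N ->
  (n %/ d + (i < n %% d) + (n %% d == i) = n.+1 %/ d + (i < n.+1 %% d))%N.
Proof.
move=> d0 id.
have hr := ltn_pmod n d0.
have hdv : (d %| n.+1)%N = ((n %% d).+1 == d).
  rewrite /dvdn {1}(divn_eq n d) -addnS modnMDl.
  move: hr; rewrite leq_eqVlt => /orP [/eqP ->|h]; first by rewrite modnn !eqxx.
  by rewrite modn_small // (ltn_eqF h).
rewrite divnS // modnS hdv.
case: (eqVneq (n %% d).+1 d) => [Hd|Hd] /=.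
  have : (i <= n %% d)%N by rewrite -ltnS Hd.
  case: (ltngtP i (n %% d)) => //= _ _; lia.
rewrite ltnS; case: (ltngtP i (n %% d)) => //= _; lia.
Qed.
Section Ineq.
Variable R : realFieldType.

Lemma ineq_i (e u T q b : R) : 0 < e -> 0 < u -> 5 * e * T <= u -> 5 * e * u <= 1 ->
  0 <= q -> 0 <= b -> b <= 1 -> q * (u * u) <= T -> e * (q + b) <= 1 / (2 * u).
Proof.
move=> e0 u0 F1 F2 q0 b0 b1 qT.
rewrite -subr_ge0.
have -> : 1 / (2 * u) - e * (q + b) = (u - 2 * e * q * (u * u) - 2 * e * b * (u * u)) / (2 * (u * u)).
  by field; rewrite lt0r_neq0.
apply: divr_ge0; last by nra.
have P1 : 0 <= e * (T - q * (u * u)) by apply: mulr_ge0; lra.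
have P2 : 0 <= e * (u * u) * (1 - b) by apply: mulr_ge0; [nra| lra].
have P3 : 0 <= u * (1 - 5 * e * u) by apply: mulr_ge0; lra.
nra.
Qed.

Lemma ineq_ii (e u q b k r : R) : 0 < u ->
  0 < 8 * e * b * (u * u) + 2 * e * (k - r) - e ->
  1 / u - e * (q + b) - e * (k + 1) / (4 * (u * u)) + e / (8 * (u * u)) <
  1 / u - e * q - e * (r + 1) / (4 * (u * u)).
Proof.
move=> u0 N; rewrite -subr_gt0.
have -> : 1 / u - e * q - e * (r + 1) / (4 * (u * u)) -
  (1 / u - e * (q + b) - e * (k + 1) / (4 * (u * u)) + e / (8 * (u * u))) =
  (8 * e * b * (u * u) + 2 * e * (k - r) - e) / (8 * (u * u)).
  by field; rewrite lt0r_neq0.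
by apply: divr_gt0 => //; nra.
Qed.

Lemma ineq_iii (e u T q r : R) : 0 < e -> 0 < u -> 5 * e * T <= u ->
  0 <= r -> q * (u * u) + r + 1 <= T ->
  e / (8 * (u * u)) < 1 / u - e * q - e * (r + 1) / (4 * (u * u)).
Proof.
move=> e0 u0 F1 r0 qT; rewrite -subr_gt0.
have -> : 1 / u - e * q - e * (r + 1) / (4 * (u * u)) - e / (8 * (u * u)) =
  (8 * u - 8 * e * q * (u * u) - 2 * e * (r + 1) - e) / (8 * (u * u)).
  by field; rewrite lt0r_neq0.
apply: divr_gt0; last by nra.
have P1 : 0 <= e * (T - 1 - r - q * (u * u)) by apply: mulr_ge0; lra.
have P2 : 0 <= e * r by apply: mulr_ge0; lra.
nra.
Qed.
End Ineq.

Theorem mainTheorem12 (R : realType) (T : nat) (eta : R) (d : nat)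
  (w : nat -> 'rV[R]_d) :
  (1 <= T)%N ->
  0 < eta -> eta <= 1 / (5 * Num.sqrt (T%:R)) ->
  d%:R = Num.max (25 * eta ^+ 2 * (T%:R) ^+ 2) 1 ->
  w 1%N = 0 ->
  (forall t : nat, (1 <= t)%N -> (t < T)%N ->
     w t.+1 = w t - eta *: gradient (hard_f eta) (w t)) ->
  forall t : nat, (1 <= t)%N -> (t <= T)%N ->
    exists j : 'I_d,
      [/\ (forall i : 'I_d, w t 0 i <= 1 / (2 * Num.sqrt (d%:R))),
          (forall k : 'I_d, k != j ->
             piece eta (w t) j > piece eta (w t) k + eta / (8 * d%:R)),
          piece eta (w t) j > eta / (8 * d%:R),
          differentiable (hard_f eta) (w t) &
          gradient (hard_f eta) (w t) = - basis_vec R j].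
Proof.
move=> T1 eta0 etaT hD w1 hw.
have D1 : (1 : R) <= d%:R by rewrite hD le_max lexx orbT.
have d0 : (0 < d)%N by rewrite -(ler1n R).
have Da : 25 * eta ^+ 2 * T%:R ^+ 2 <= (d%:R : R) by rewrite hD le_max lexx.
have hv : Num.sqrt (T%:R : R) * Num.sqrt (T%:R) = T%:R by rewrite -expr2 sqr_sqrtr // ler0n.
have v0 : 0 < Num.sqrt (T%:R : R) by rewrite sqrtr_gt0 ltr0n.
move: etaT hv v0; move: (Num.sqrt (T%:R : R) : R) => v etaT hv v0.
have hT : 5 * eta * v <= 1.
  have E : (5 * v) * (1 / (5 * v)) = 1 by field; rewrite lt0r_neq0.
  have P : 0 <= (5 * v) * (1 / (5 * v) - eta) by apply: mulr_ge0; [lra| rewrite subr_ge0].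
  rewrite mulrBr E in P.
  lra.
have T1R : (1 : R) <= T%:R by rewrite ler1n.
have hT2 : 25 * (eta * eta) * T%:R <= 1.
  rewrite -hv.
  have P : 0 <= (1 - 5 * eta * v) * (5 * eta * v) by apply: mulr_ge0; nra.
  nra.
have hu : Num.sqrt (d%:R : R) * Num.sqrt (d%:R) = d%:R by rewrite -expr2 sqr_sqrtr // ler0n.
have u0 : 0 < Num.sqrt (d%:R : R) by rewrite sqrtr_gt0 ltr0n.
move: hu u0; move Hs: (Num.sqrt (d%:R : R)) => u hu u0.
have F1 : 5 * eta * T%:R <= u.
  move: Da; rewrite -hu !expr2 => Da; nra.
have F2 : 5 * eta * u <= 1.
  have H : 25 * (eta * eta) * (u * u) <= 1.
    move: hD; rewrite -hu; case: (leP (25 * eta ^+ 2 * T%:R ^+ 2) 1) => h ->.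
      nra.
    move: h; rewrite !expr2 => h.
    have P : 0 <= 25 * (eta * eta) * T%:R by nra.
    nra.
  nra.
pose W n : 'rV[R]_d := \row_i (eta * (n %/ d + (i < n %% d))%:R).
have key : forall n, (n < T)%N ->
  [/\ (forall i : 'I_d, W n 0 i <= 1 / (2 * u)),
      (forall k : 'I_d, k != Ordinal (ltn_pmod n d0) ->
         piece eta (W n) (Ordinal (ltn_pmod n d0)) > piece eta (W n) k + eta / (8 * d%:R)) &
      piece eta (W n) (Ordinal (ltn_pmod n d0)) > eta / (8 * d%:R)].
  move=> n nT.
  have Pi : forall i : 'I_d, piece eta (W n) i = 1 / u - eta * ((n %/ d)%:R + (i < n %% d)%:R)
      - eta * ((i : nat)%:R + 1) / (4 * (u * u)).
    by move=> i; rewrite /piece mxE natrD Hs -hu natr1.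
  have qT : (n %/ d)%:R * (u * u) + (n %% d)%:R + 1 <= (T%:R : R).
    by rewrite hu -natrM -natrD natr1 ler_nat -divn_eq.
  have rd : (n %% d)%:R + 1 <= (u * u : R).
    by rewrite hu natr1 ler_nat (ltn_pmod n d0).
  have q0 : 0 <= ((n %/ d)%:R : R) by rewrite ler0n.
  have r0 : 0 <= ((n %% d)%:R : R) by rewrite ler0n.
  split.
  - move=> i; rewrite mxE natrD.
    apply: (@ineq_i _ _ _ T%:R) => //; rewrite ?ler0n //; try lra.
    by case: (_ < _)%N; rewrite ?mulr1n ?mulr0n ?lexx ?ler01.
  - move=> k kj; rewrite !Pi /= ltnn mulr0n addr0 -hu.
    apply: ineq_ii => //.
    have k0 : 0 <= ((k : nat)%:R : R) by rewrite ler0n.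
    move: kj; rewrite -val_eqE /=.
    case: (ltngtP k (n %% d)) => // h _; rewrite ?mulr1n ?mulr0n.
      have P : 0 <= eta * (u * u - 1 - (n %% d)%:R + (k : nat)%:R) by apply: mulr_ge0; lra.
      nra.
    have h' : (n %% d)%:R + 1 <= ((k : nat)%:R : R) by rewrite natr1 ler_nat.
    nra.
  - rewrite Pi /= ltnn mulr0n addr0 -hu.
    by apply: (@ineq_iii _ _ _ T%:R) => //; lra.
have Hw : forall n, (n < T)%N -> w n.+1 = W n.
  elim=> [|n IH] nT.
    by rewrite w1; apply/rowP => i; rewrite !mxE div0n mod0n ltn0 mulr0.
  rewrite hw // IH ?(ltnW nT) //.
  have [K1 K2 K3] := key n (ltnW nT).
  have m0 : 0 < eta / (8 * d%:R) by rewrite divr_gt0 // mulr_gt0 // ltr0n.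
  have [_ G] := @hard_f_grad R d eta (W n) _ _ m0 K3 K2.
  rewrite G; apply/rowP => i; rewrite !mxE -val_eqE /=.
  rewrite -(@step_nat d n i d0 (ltn_ord i)) !natrD.
  have -> : (i == Ordinal (ltn_pmod n d0)) = (n %% d == i)%N by rewrite eq_sym -val_eqE.
  set b1 := ((n %/ d)%:R : R); set b2 := ((i < n %% d)%N%:R : R); set b3 := ((n %% d == i)%N%:R : R).
  rewrite mulrN opprK; ring.
move=> t t1 tT.
case: t t1 tT => // n _ nT.
rewrite Hw //.
have [K1 K2 K3] := key n nT.
have m0 : 0 < eta / (8 * d%:R) by rewrite divr_gt0 // mulr_gt0 // ltr0n.
have [G1 G2] := @hard_f_grad R d eta (W n) _ _ m0 K3 K2.
by exists (Ordinal (ltn_pmod n d0)); split; rewrite ?Hs.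
Qed.
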